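(* If $x\in CBV[0,1]$ and $A\in\widehat{\Omega}[0,1]$, then the Riemann–Stieltjes integral $\int_0^1A(s)\,dx(s)$ exists.
   Context: $CBV[0,1]$ denotes the continuous real functions of bounded Jordan variation on $[0,1]$. For $\varepsilon>0$ and $a<b$, a bounded $A\colon[a,b]\to\mathbb R$ belongs to $\Omega_\varepsilon[a,b]$ if there exists $\delta>0$ such that $\operatorname{osc}_{[t,s]}A\le\varepsilon$ whenever $t,s\in[a,b]$ and $0\le s-t\le\delta$, where $\operatorname{osc}_{[t,s]}A=\sup_{t\le\tau\le\sigma\le s}|A(\sigma)-A(\tau)|$. $\Omega[0,1]$ is the set of bounded $A\colon[0,1]\to\mathbb R$ such that for every $\varepsilon>0$ there is $a\in(0,1)$ with $A|_{[0,a]}\in\Omega_\varepsilon[0,a]$ and $A|_{[a,1]}$ of bounded variation on $[a,1]$. $\widehat{\Omega}[0,1]=\Omega[0,1]\cup C[0,1]\cup BV[0,1]$. *)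

(* Defs.v *)
From Stdlib Require Import Reals Lra.
Open Scope R_scope.

Fixpoint sumR (n : nat) (f : nat -> R) : R :=
  match n with
  | O => 0
  | S m => sumR m f + f m
  end.

Definition is_partition (a b : R) (n : nat) (p : nat -> R) : Prop :=
  p 0%nat = a /\ p n = b /\ (forall i, (i < n)%nat -> p i < p (S i)).

Definition is_tagged (n : nat) (p xi : nat -> R) : Prop :=
  forall i, (i < n)%nat -> p i <= xi i <= p (S i).

Definition mesh_lt (n : nat) (p : nat -> R) (delta : R) : Prop :=
  forall i, (i < n)%nat -> p (S i) - p i < delta.

Definition RS_sum (A x : R -> R) (n : nat) (p xi : nat -> R) : R :=
  sumR n (fun i => A (xi i) * (x (p (S i)) - x (p i))).

Definition RS_integral_is (A x : R -> R) (a b I : R) : Prop :=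
  forall eps, 0 < eps -> exists delta, 0 < delta /\
    forall n p xi, is_partition a b n p -> is_tagged n p xi ->
      mesh_lt n p delta -> Rabs (RS_sum A x n p xi - I) < eps.

Definition RS_integrable (A x : R -> R) (a b : R) : Prop :=
  exists I, RS_integral_is A x a b I.

Definition var_sum (f : R -> R) (n : nat) (p : nat -> R) : R :=
  sumR n (fun i => Rabs (f (p (S i)) - f (p i))).

Definition BV_on (f : R -> R) (a b : R) : Prop :=
  exists M, forall n p, is_partition a b n p -> var_sum f n p <= M.

Definition bounded_on (f : R -> R) (a b : R) : Prop :=
  exists M, forall t, a <= t <= b -> Rabs (f t) <= M.

Definition continuous_on (f : R -> R) (a b : R) : Prop :=
  forall t, a <= t <= b -> forall eps, 0 < eps -> exists delta, 0 < delta /\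
    forall s, a <= s <= b -> Rabs (s - t) < delta -> Rabs (f s - f t) < eps.

Definition osc_le (A : R -> R) (t s eps : R) : Prop :=
  forall tau sigma, t <= tau -> tau <= sigma -> sigma <= s ->
    Rabs (A sigma - A tau) <= eps.

Definition Omega_eps (eps : R) (A : R -> R) (a b : R) : Prop :=
  bounded_on A a b /\
  exists delta, 0 < delta /\
    forall t s, a <= t <= b -> a <= s <= b -> 0 <= s - t <= delta ->
      osc_le A t s eps.

Definition Omega01 (A : R -> R) : Prop :=
  bounded_on A 0 1 /\
  forall eps, 0 < eps -> exists a, 0 < a < 1 /\
    Omega_eps eps A 0 a /\ BV_on A a 1.

Definition CBV01 (x : R -> R) : Prop := continuous_on x 0 1 /\ BV_on x 0 1.

Definition Omega_hat01 (A : R -> R) : Prop :=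
  Omega01 A \/ continuous_on A 0 1 \/ BV_on A 0 1.

(* Main.v *)
Require Import Defs.
From Stdlib Require Import Reals Lra Lia.
Open Scope R_scope.

Lemma sumR_ext n f g : (forall i, (i < n)%nat -> f i = g i) -> sumR n f = sumR n g.
Proof. induction n; simpl; intros H; auto. rewrite IHn by (intros; apply H; lia). rewrite H by lia. auto. Qed.

Lemma sumR_plus n f g : sumR n (fun i => f i + g i) = sumR n f + sumR n g.
Proof. induction n; simpl; [lra| rewrite IHn; lra]. Qed.

Lemma sumR_minus n f g : sumR n (fun i => f i - g i) = sumR n f - sumR n g.
Proof. induction n; simpl; [lra| rewrite IHn; lra]. Qed.

Lemma sumR_scal n c f : sumR n (fun i => c * f i) = c * sumR n f.
Proof. induction n; simpl; [lra| rewrite IHn; lra]. Qed.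

Lemma sumR_abs n f : Rabs (sumR n f) <= sumR n (fun i => Rabs (f i)).
Proof. induction n; simpl. rewrite Rabs_R0; lra.
 eapply Rle_trans; [apply Rabs_triang| lra]. Qed.

Lemma sumR_le n f g : (forall i, (i < n)%nat -> f i <= g i) -> sumR n f <= sumR n g.
Proof. induction n; simpl; intros H; [lra|]. assert (f n <= g n) by (apply H; lia).
 assert (sumR n f <= sumR n g) by (apply IHn; intros; apply H; lia). lra. Qed.

Lemma sumR_tele n h : sumR n (fun i => h (S i) - h i) = h n - h O.
Proof. induction n; simpl; [lra| rewrite IHn; lra]. Qed.

Lemma sumR_swap n m F : sumR n (fun i => sumR m (fun j => F i j)) = sumR m (fun j => sumR n (fun i => F i j)).
Proof. induction n; simpl.
 - induction m; simpl; lra.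
 - rewrite IHn. rewrite <- sumR_plus. reflexivity. Qed.

Lemma sumR_split a b f : sumR (a + b) f = sumR a f + sumR b (fun j => f (a + j)%nat).
Proof. induction b; simpl. rewrite Nat.add_0_r; lra.
 rewrite Nat.add_succ_r. simpl. rewrite IHb. lra. Qed.

Lemma divmod_eq i j m : (j < m)%nat -> ((i*m + j)/m = i /\ (i*m+j) mod m = j)%nat.
Proof. intros H. split.
 - symmetry. apply (Nat.div_unique _ _ _ j); lia.
 - symmetry. apply (Nat.mod_unique _ _ i j); lia. Qed.

Lemma sumR_flatten n m F : (0 < m)%nat ->
  sumR n (fun i => sumR m (fun j => F i j)) = sumR (n*m) (fun k => F (k / m)%nat (k mod m)%nat).
Proof. intros Hm. induction n; simpl. lra.
 rewrite IHn. replace (m + n*m)%nat with (n*m + m)%nat by lia.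
 rewrite sumR_split. f_equal. apply sumR_ext. intros j Hj.
 destruct (divmod_eq n j m Hj) as [-> ->]. reflexivity. Qed.

Definition is_wpart (a b : R) (n : nat) (p : nat -> R) : Prop :=
  p 0%nat = a /\ p n = b /\ (forall i, (i < n)%nat -> p i <= p (S i)).

Lemma part_wpart a b n p : is_partition a b n p -> is_wpart a b n p.
Proof. intros [H1 [H2 H3]]. split; [|split]; auto. intros i Hi; left; auto. Qed.

Lemma compress g n r : (forall i, (i < n)%nat -> r i <= r (S i)) ->
  exists m q, q O = r O /\ q m = r n /\ (forall i, (i < m)%nat -> q i < q (S i)) /\
    var_sum g n r = var_sum g m q.
Proof.
  induction n; intros H.
  - exists O, r. repeat split; auto. intros; lia.
  - destruct IHn as [m [q [H0 [Hm [Hinc Hv]]]]]. intros; apply H; lia.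
    assert (Hn : r n <= r (S n)) by (apply H; lia).
    destruct Hn as [Hlt | Heq].
    + exists (S m), (fun k => if (k <=? m)%nat then q k else r (S n)).
      repeat split.
      * simpl. auto.
      * destruct (Nat.leb_spec (S m) m); [lia|]. auto.
      * intros i Hi. destruct (Nat.leb_spec i m); [|lia].
        destruct (Nat.leb_spec (S i) m).
        -- apply Hinc; lia.
        -- assert (i = m) by lia. subst. lra.
      * unfold var_sum in *. cbn [sumR]. rewrite Hv. rewrite Nat.leb_refl. destruct (Nat.leb_spec (S m) m); [lia|].
        f_equal. apply sumR_ext. intros i Hi.
        destruct (Nat.leb_spec i m); [|lia]. destruct (Nat.leb_spec (S i) m); [|lia]. auto.
        rewrite Hm. auto.
    + exists m, q. repeat split; auto. rewrite Hm; auto.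
      unfold var_sum in *. simpl. rewrite Hv, Heq. unfold Rminus. rewrite Rplus_opp_r, Rabs_R0. lra.
Qed.

Lemma BV_weak g a b M : (forall n p, is_partition a b n p -> var_sum g n p <= M) ->
  forall n r, is_wpart a b n r -> var_sum g n r <= M.
Proof. intros HB n r [H0 [H1 H2]]. destruct (compress g n r H2) as [m [q [Q0 [Qm [Qi Qv]]]]].
  rewrite Qv. apply HB. split; [congruence| split; [congruence| exact Qi]]. Qed.

Definition clamp (lo hi t : R) := Rmax lo (Rmin t hi).

Lemma clamp_lo lo hi t : t <= lo -> clamp lo hi t = lo.
Proof. intros; unfold clamp, Rmax, Rmin; repeat destruct Rle_dec; lra. Qed.
Lemma clamp_hi lo hi t : lo <= hi -> hi <= t -> clamp lo hi t = hi.
Proof. intros; unfold clamp, Rmax, Rmin; repeat destruct Rle_dec; lra. Qed.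
Lemma clamp_in lo hi t : lo <= t <= hi -> clamp lo hi t = t.
Proof. intros; unfold clamp, Rmax, Rmin; repeat destruct Rle_dec; lra. Qed.
Lemma clamp_mono lo hi s t : lo <= hi -> s <= t -> clamp lo hi s <= clamp lo hi t.
Proof. intros; unfold clamp, Rmax, Rmin; repeat destruct Rle_dec; lra. Qed.
Lemma clamp_range lo hi t : lo <= hi -> lo <= clamp lo hi t <= hi.
Proof. intros; unfold clamp, Rmax, Rmin; repeat destruct Rle_dec; lra. Qed.

Lemma clamp_sym a b c d : a <= b -> c <= d ->
  (clamp a b d = clamp c d b /\ clamp a b c = clamp c d a) \/
  (clamp a b d = clamp a b c /\ clamp c d b = clamp c d a).
Proof. intros; unfold clamp, Rmax, Rmin; repeat destruct Rle_dec;
  first [left; split; lra | right; split; lra]. Qed.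

Lemma clamp_ne a b c d : a <= b -> c <= d -> clamp a b d <> clamp a b c -> c < b /\ a < d.
Proof. intros H1 H2 H3. unfold clamp, Rmax, Rmin in H3; repeat destruct Rle_dec; split; lra. Qed.

Lemma wpart_mono a b n p : is_wpart a b n p -> forall i j, (i <= j)%nat -> (j <= n)%nat -> p i <= p j.
Proof. intros [_ [_ H]] i j Hij. induction Hij; intros Hj. lra.
  assert (p m <= p (S m)) by (apply H; lia). assert (p i <= p m) by (apply IHHij; lia). lra. Qed.

Lemma wpart_range a b n p : is_wpart a b n p -> forall i, (i <= n)%nat -> a <= p i <= b.
Proof. intros Hw i Hi. pose proof Hw as [H0 [H1 _]].
  split. rewrite <- H0. apply (wpart_mono a b n p Hw); lia.
  rewrite <- H1. apply (wpart_mono a b n p Hw); lia. Qed.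

Lemma next_divmod k m : (0 < m)%nat ->
  ((S (k mod m) < m /\ S k / m = k / m /\ S k mod m = S (k mod m)) \/
   (S (k mod m) = m /\ S k / m = S (k / m) /\ S k mod m = 0))%nat.
Proof. intros Hm. pose proof (Nat.div_mod k m ltac:(lia)) as E.
  pose proof (Nat.mod_upper_bound k m ltac:(lia)).
  destruct (Nat.eq_dec (S (k mod m)) m) as [Heq|Hne].
  - right. split; auto. assert (S k = (S (k/m)) * m + 0)%nat by nia.
    rewrite H0. destruct (divmod_eq (S (k/m)) 0 m Hm). auto.
  - left. split; [lia|]. assert (S k = (k/m) * m + S (k mod m))%nat by nia.
    rewrite H0. apply divmod_eq. lia. Qed.

Section Core.
Variables (f g : R -> R) (e M delta : R).
Hypothesis Hf : forall s t, 0 <= s <= 1 -> 0 <= t <= 1 -> Rabs (s - t) < 2 * delta -> Rabs (f s - f t) <= e.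
Hypothesis He : 0 <= e.
Hypothesis Hg : forall N r, is_wpart 0 1 N r -> var_sum g N r <= M.

Lemma core n p xi m q eta :
  is_wpart 0 1 n p -> is_tagged n p xi -> mesh_lt n p delta ->
  is_wpart 0 1 m q -> is_tagged m q eta -> mesh_lt m q delta ->
  Rabs (RS_sum f g n p xi - RS_sum f g m q eta) <= e * M.
Proof.
  intros Hp Tp Mp Hq Tq Mq.
  pose proof (wpart_range _ _ _ _ Hp) as Rp.
  pose proof (wpart_range _ _ _ _ Hq) as Rq.
  pose proof Hp as [P0 [Pn Pi]]. pose proof Hq as [Q0 [Qm Qi]].
  assert (Hm : (0 < m)%nat). { destruct m. rewrite Q0 in Qm. lra. lia. }
  set (c := fun i j => clamp (p i) (p (S i)) (q j)).
  set (d := fun i j => g (c i (S j)) - g (c i j)).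
  set (ee := fun j i => g (clamp (q j) (q (S j)) (p (S i))) - g (clamp (q j) (q (S j)) (p i))).
  assert (Hde : forall i j, (i < n)%nat -> (j < m)%nat -> d i j = ee j i).
  { intros i j Hi Hj. unfold d, ee, c.
    destruct (clamp_sym (p i) (p (S i)) (q j) (q (S j)) ltac:(apply Pi; lia) ltac:(apply Qi; lia))
      as [[E1 E2]|[E1 E2]]; rewrite E1, E2; lra. }
  assert (HSP : RS_sum f g n p xi = sumR n (fun i => sumR m (fun j => f (xi i) * d i j))).
  { unfold RS_sum. apply sumR_ext. intros i Hi. rewrite sumR_scal. f_equal.
    unfold d. rewrite (sumR_tele m (fun j => g (c i j))). unfold c.
    rewrite Qm, Q0. rewrite clamp_hi, clamp_lo. auto.
    apply (Rp i); lia. apply Pi; lia. apply (Rp (S i)); lia. }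
  assert (HSQ : RS_sum f g m q eta = sumR n (fun i => sumR m (fun j => f (eta j) * d i j))).
  { rewrite sumR_swap. unfold RS_sum. apply sumR_ext. intros j Hj.
    rewrite (sumR_ext n (fun i => f (eta j) * d i j) (fun i => f (eta j) * ee j i))
      by (intros; rewrite Hde; auto).
    rewrite sumR_scal. f_equal. unfold ee.
    rewrite (sumR_tele n (fun i => g (clamp (q j) (q (S j)) (p i)))).
    rewrite Pn, P0. rewrite clamp_hi, clamp_lo. auto.
    apply (Rq j); lia. apply Qi; lia. apply (Rq (S j)); lia. }
  rewrite HSP, HSQ, <- sumR_minus.
  eapply Rle_trans. apply sumR_abs.
  eapply Rle_trans. apply (sumR_le n _ (fun i => e * sumR m (fun j => Rabs (d i j)))).
  { intros i Hi. rewrite <- sumR_minus. eapply Rle_trans. apply sumR_abs.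
    rewrite <- sumR_scal. apply sumR_le. intros j Hj.
    replace (f (xi i) * d i j - f (eta j) * d i j) with ((f (xi i) - f (eta j)) * d i j) by ring.
    rewrite Rabs_mult. destruct (Req_dec (d i j) 0) as [Z|Z].
    - rewrite Z, Rabs_R0. lra.
    - apply Rmult_le_compat_r. apply Rabs_pos.
      assert (Hne : c i (S j) <> c i j). { intro E. apply Z. unfold d. rewrite E. ring. }
      unfold c in Hne. apply clamp_ne in Hne; [|apply Pi; lia|apply Qi; lia].
      specialize (Tp i Hi). specialize (Tq j Hj). specialize (Mp i Hi). specialize (Mq j Hj).
      pose proof (Rp i ltac:(lia)). pose proof (Rp (S i) ltac:(lia)).
      pose proof (Rq j ltac:(lia)). pose proof (Rq (S j) ltac:(lia)).
      apply Hf; try lra. unfold Rabs; destruct Rcase_abs; lra. }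
  rewrite sumR_scal. apply Rmult_le_compat_l; auto.
  set (r := fun k => c (k / m)%nat (k mod m)%nat).
  assert (HrS : forall k, (k < n * m)%nat -> r (S k) = c (k / m)%nat (S (k mod m))).
  { intros k Hk. assert (Hkm : (k / m < n)%nat) by (apply Nat.Div0.div_lt_upper_bound; lia).
    unfold r. destruct (next_divmod k m Hm) as [[A1 [A2 A3]]|[A1 [A2 A3]]]; rewrite A2, A3; auto.
    rewrite A1. unfold c. rewrite Qm, Q0. rewrite clamp_lo, clamp_hi. auto.
    apply Pi; lia. apply (Rp (S (k/m))); lia. apply (Rp (S (k/m))); lia. }
  rewrite (sumR_flatten n m (fun i j => Rabs (d i j)) Hm).
  replace (sumR (n * m) (fun k => Rabs (d (k / m)%nat (k mod m)%nat))) with (var_sum g (n*m) r).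
  2:{ unfold var_sum. apply sumR_ext. intros k Hk. rewrite HrS by auto. reflexivity. }
  apply Hg. split; [|split].
  - unfold r. rewrite Nat.Div0.div_0_l, Nat.Div0.mod_0_l. unfold c. rewrite Q0, clamp_lo; auto.
    apply (Rp O); lia.
  - unfold r. destruct (divmod_eq n 0 m Hm) as [A1 A2]. rewrite Nat.add_0_r in A1, A2.
    rewrite A1, A2. unfold c. rewrite Q0, clamp_lo; auto. lra.
  - intros k Hk. rewrite HrS by auto. unfold r, c. apply clamp_mono.
    apply Pi. apply Nat.Div0.div_lt_upper_bound; lia. apply Qi. apply Nat.mod_upper_bound; lia.
Qed.
End Core.

Lemma abel n (a b : nat -> R) :
  sumR n (fun i => a (S i) * (b (S i) - b i)) + sumR (S n) (fun k => b k * (a (S k) - a k))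
  = a (S n) * b n - a O * b O.
Proof. induction n. simpl. ring.
  replace (sumR (S n) (fun i => a (S i) * (b (S i) - b i))) with
    (sumR n (fun i => a (S i) * (b (S i) - b i)) + a (S n) * (b (S n) - b n)) by reflexivity.
  replace (sumR (S (S n)) (fun k => b k * (a (S k) - a k))) with
    (sumR (S n) (fun k => b k * (a (S k) - a k)) + b (S n) * (a (S (S n)) - a (S n))) by reflexivity.
  lra. Qed.

Definition pp (n : nat) (xi : nat -> R) (k : nat) : R :=
  match k with O => 0 | S k' => if (k' <? n)%nat then xi k' else 1 end.

Lemma parts A x n p xi : is_partition 0 1 n p ->
  RS_sum A x n p xi = A 1 * x 1 - A 0 * x 0 - RS_sum x A (S n) (pp n xi) p.
Proof. intros [P0 [Pn _]].
  pose proof (abel n (fun k => A (pp n xi k)) (fun k => x (p k))) as H. cbv beta in H.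
  unfold RS_sum.
  rewrite (sumR_ext n _ (fun i => A (pp n xi (S i)) * (x (p (S i)) - x (p i)))).
  2:{ intros i Hi. unfold pp. destruct (Nat.ltb_spec i n); [auto|lia]. }
  assert (E1 : pp n xi (S n) = 1) by (unfold pp; destruct (Nat.ltb_spec n n); [lia|auto]).
  assert (E0 : pp n xi 0 = 0) by reflexivity.
  rewrite E1, E0, Pn, P0 in H. lra. Qed.

Lemma parts_part n p xi delta : is_partition 0 1 n p -> is_tagged n p xi -> mesh_lt n p delta ->
  is_wpart 0 1 (S n) (pp n xi) /\ is_tagged (S n) (pp n xi) p /\ mesh_lt (S n) (pp n xi) (2 * delta).
Proof. intros Hp T Mh.
  pose proof (wpart_range _ _ _ _ (part_wpart _ _ _ _ Hp)) as R.
  pose proof Hp as [P0 [Pn Pi]].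
  assert (Hn : (0 < n)%nat) by (destruct n; [rewrite P0 in Pn; lra| lia]).
  split; [|split].
  - split; [|split]. reflexivity. simpl. destruct (Nat.ltb_spec n n); [lia|auto].
    intros k Hk. destruct k as [|k]; simpl.
    + destruct (Nat.ltb_spec 0 n); [|lia]. specialize (T 0%nat H). lra.
    + destruct (Nat.ltb_spec k n); [|lia]. destruct (Nat.ltb_spec (S k) n).
      * pose proof (T k H). pose proof (T (S k) H0). lra.
      * pose proof (T k H). assert (S k = n) by lia. subst. lra.
  - intros k Hk. destruct k as [|k]; simpl.
    + destruct (Nat.ltb_spec 0 n); [|lia]. specialize (T 0%nat H). lra.
    + destruct (Nat.ltb_spec k n); [|lia]. destruct (Nat.ltb_spec (S k) n).
      * pose proof (T k H). pose proof (T (S k) H0). lra.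
      * pose proof (T k H). assert (S k = n) by lia. subst. lra.
  - intros k Hk. destruct k as [|k]; simpl.
    + destruct (Nat.ltb_spec 0 n); [|lia]. specialize (T 0%nat H). specialize (Mh 0%nat H). lra.
    + destruct (Nat.ltb_spec k n); [|lia]. destruct (Nat.ltb_spec (S k) n).
      * pose proof (T k H). pose proof (T (S k) H0). pose proof (Mh k H). pose proof (Mh (S k) H0). lra.
      * pose proof (T k H). pose proof (Mh k H). assert (S k = n) by lia. subst. lra.
Qed.

Lemma clamp_lip t y : Rabs (clamp 0 1 y - t) <= Rabs (y - t) \/ ~ (0 <= t <= 1).
Proof. destruct (Rle_dec 0 t); destruct (Rle_dec t 1); try (right; lra). left.
  unfold clamp, Rmax, Rmin; repeat destruct Rle_dec; unfold Rabs; repeat destruct Rcase_abs; lra. Qed.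

Lemma UC f : continuous_on f 0 1 -> forall e, 0 < e -> exists delta, 0 < delta /\
  forall s t, 0 <= s <= 1 -> 0 <= t <= 1 -> Rabs (s - t) < delta -> Rabs (f s - f t) <= e.
Proof. intros Hc e He.
  set (h := fun t => f (clamp 0 1 t)).
  assert (Hh : forall t, 0 <= t <= 1 -> continuity_pt h t).
  { intros t Ht. unfold continuity_pt, continue_in, limit1_in, limit_in. intros eps Heps.
    destruct (Hc t Ht eps Heps) as [d [Hd H]]. exists d. split; auto.
    intros y [_ Hy]. simpl in Hy |- *. unfold Rdist in *. unfold h.
    rewrite (clamp_in 0 1 t Ht). apply H. apply clamp_range; lra.
    destruct (clamp_lip t y); [lra | tauto]. }
  destruct (Heine h (fun c => 0 <= c <= 1) (compact_P3 0 1) Hh (mkposreal e He)) as [d Hd].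
  exists d. split. apply cond_pos. intros s t Hs Ht Hst.
  specialize (Hd s t Hs Ht Hst). unfold h in Hd. rewrite !clamp_in in Hd by auto. simpl in Hd. lra.
Qed.

Definition CP f g := forall eps, 0 < eps -> exists delta, 0 < delta /\
  forall n p xi m q eta, is_partition 0 1 n p -> is_tagged n p xi -> mesh_lt n p delta ->
  is_partition 0 1 m q -> is_tagged m q eta -> mesh_lt m q delta ->
  Rabs (RS_sum f g n p xi - RS_sum f g m q eta) <= eps.

Definition up (k i : nat) : R := INR i / INR (S k).

Lemma up_part k : is_partition 0 1 (S k) (up k) /\ is_tagged (S k) (up k) (up k).
Proof. assert (H : 0 < INR (S k)) by (apply lt_0_INR; lia).
  split; [split; [|split]|].
  - unfold up. simpl. unfold Rdiv; ring.
  - unfold up. field. lra.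
  - intros i _. unfold up. rewrite (S_INR i). unfold Rdiv.
    apply Rmult_lt_compat_r. apply Rinv_0_lt_compat; auto. lra.
  - intros i _. unfold up. rewrite (S_INR i). unfold Rdiv. split. lra.
    apply Rmult_le_compat_r. left; apply Rinv_0_lt_compat; auto. lra. Qed.

Lemma up_mesh k N d : (0 < N)%nat -> / INR N < d -> (N <= k)%nat -> mesh_lt (S k) (up k) d.
Proof. intros HN Hd Hk i _. unfold up. rewrite S_INR.
  assert (H : 0 < INR (S k)) by (apply lt_0_INR; lia).
  replace ((INR i + 1) / INR (S k) - INR i / INR (S k)) with (/ INR (S k)) by (field; lra).
  eapply Rle_lt_trans; [|apply Hd]. apply Rinv_le_contravar. apply lt_0_INR; auto.
  apply le_INR. lia. Qed.

Lemma CP_exists f g : CP f g -> RS_integrable f g 0 1.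
Proof. intros Hcp.
  set (u := fun k => RS_sum f g (S k) (up k) (up k)).
  assert (Hc : Cauchy_crit u).
  { intros eps Heps. destruct (Hcp (eps/2) ltac:(lra)) as [d [Hd H]].
    destruct (archimed_cor1 d Hd) as [N [HN1 HN2]]. exists N. intros a b Ha Hb.
    unfold Rdist, u. destruct (up_part a), (up_part b).
    eapply Rle_lt_trans. apply H; eauto using up_mesh. lra. }
  destruct (R_complete u Hc) as [l Hl]. exists l. intros eps Heps.
  destruct (Hcp (eps/2) ltac:(lra)) as [d [Hd H]].
  destruct (archimed_cor1 d Hd) as [N2 [HN1 HN2]].
  destruct (Hl (eps/2) ltac:(lra)) as [N1 HN].
  exists d. split; auto. intros n p xi Hp Ht Hm.
  set (k := max N1 N2). specialize (HN k ltac:(lia)). unfold Rdist in HN.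
  destruct (up_part k).
  assert (Rabs (RS_sum f g n p xi - u k) <= eps / 2).
  { apply H; eauto. apply (up_mesh k N2); auto. lia. }
  replace (RS_sum f g n p xi - l) with ((RS_sum f g n p xi - u k) + (u k - l)) by ring.
  eapply Rle_lt_trans. apply Rabs_triang. lra. Qed.

Lemma eM eps M : 0 < eps -> eps / (Rabs M + 1) * M <= eps /\ 0 < eps / (Rabs M + 1).
Proof. intros H. pose proof (Rabs_pos M). pose proof (Rle_abs M).
  assert (Hp : 0 < eps / (Rabs M + 1)) by (apply Rdiv_lt_0_compat; lra).
  split; auto.
  assert (E : eps / (Rabs M + 1) * (Rabs M + 1) = eps) by (field; lra).
  assert (eps / (Rabs M + 1) * M <= eps / (Rabs M + 1) * Rabs M) by (apply Rmult_le_compat_l; lra).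
  lra. Qed.

Lemma CP_cont A x : continuous_on A 0 1 -> BV_on x 0 1 -> CP A x.
Proof. intros Hc [M HM] eps Heps. destruct (eM eps M Heps) as [E1 E2].
  destruct (UC A Hc _ E2) as [d [Hd H]]. exists (d/2). split. lra.
  intros. eapply Rle_trans; [|apply E1].
  apply (core A x _ M (d/2)); auto using part_wpart.
  intros; apply H; auto; lra. lra. apply (BV_weak x 0 1 M HM). Qed.

Lemma CP_BV A x : continuous_on x 0 1 -> BV_on A 0 1 -> CP A x.
Proof. intros Hc [M HM] eps Heps. destruct (eM eps M Heps) as [E1 E2].
  destruct (UC x Hc _ E2) as [d [Hd H]]. exists (d/4). split. lra.
  intros n p xi m q eta Hp Tp Mp Hq Tq Mq.
  rewrite (parts A x n p xi Hp), (parts A x m q eta Hq).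
  destruct (parts_part n p xi _ Hp Tp Mp) as [W1 [T1 M1]].
  destruct (parts_part m q eta _ Hq Tq Mq) as [W2 [T2 M2]].
  replace (A 1 * x 1 - A 0 * x 0 - RS_sum x A (S n) (pp n xi) p -
     (A 1 * x 1 - A 0 * x 0 - RS_sum x A (S m) (pp m eta) q)) with
   (RS_sum x A (S m) (pp m eta) q - RS_sum x A (S n) (pp n xi) p) by ring.
  eapply Rle_trans; [|apply E1].
  apply (core x A _ M (d/2)); auto.
  intros; apply H; auto; lra. lra. apply (BV_weak A 0 1 M HM).
  replace (d/2) with (2 * (d/4)) by lra. auto.
  replace (d/2) with (2 * (d/4)) by lra. auto. Qed.

Lemma CP_Omega A x : Omega01 A -> CBV01 x -> CP A x.
Proof. intros [_ HO] [Hxc [Mx HMx]] eps Heps.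
  destruct (eM (eps/2) Mx ltac:(lra)) as [E1 E2].
  destruct (HO _ E2) as [a [Ha [[_ [d1 [Hd1 Hosc]]] [MA HMA]]]].
  set (A1 := fun t => A (Rmin t a)).
  set (A2 := fun t => A (Rmax a t) - A a).
  assert (Hs : forall t, A t = A1 t + A2 t).
  { intros t. unfold A1, A2, Rmin, Rmax. destruct Rle_dec; destruct Rle_dec; try lra.
    assert (t = a) by lra. subst. ring. }
  assert (HB2 : BV_on A2 0 1).
  { exists MA. intros n p Hp. pose proof (part_wpart _ _ _ _ Hp) as W.
    pose proof (wpart_range _ _ _ _ W) as R. destruct W as [P0 [Pn Pi]].
    replace (var_sum A2 n p) with (var_sum A n (fun k => Rmax a (p k))).
    apply (BV_weak A a 1 MA HMA). split; [|split].
    - rewrite P0. unfold Rmax; destruct Rle_dec; lra.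
    - rewrite Pn. unfold Rmax; destruct Rle_dec; lra.
    - intros i Hi. specialize (Pi i Hi). unfold Rmax; repeat destruct Rle_dec; lra.
    - unfold var_sum. apply sumR_ext. intros i Hi. unfold A2. f_equal. ring. }
  destruct (CP_BV A2 x Hxc HB2 (eps/2) ltac:(lra)) as [d2 [Hd2 H2]].
  exists (Rmin (d1/2) d2). split. apply Rmin_glb_lt; lra.
  intros n p xi m q eta Hp Tp Mp Hq Tq Mq.
  assert (Mp2 : mesh_lt n p d2) by (intros i Hi; specialize (Mp i Hi); pose proof (Rmin_r (d1/2) d2); lra).
  assert (Mq2 : mesh_lt m q d2) by (intros i Hi; specialize (Mq i Hi); pose proof (Rmin_r (d1/2) d2); lra).
  assert (Mp1 : mesh_lt n p (d1/2)) by (intros i Hi; specialize (Mp i Hi); pose proof (Rmin_l (d1/2) d2); lra).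
  assert (Mq1 : mesh_lt m q (d1/2)) by (intros i Hi; specialize (Mq i Hi); pose proof (Rmin_l (d1/2) d2); lra).
  assert (SS : forall k r z, RS_sum A x k r z = RS_sum A1 x k r z + RS_sum A2 x k r z).
  { intros. unfold RS_sum. rewrite <- sumR_plus. apply sumR_ext. intros. rewrite Hs. ring. }
  rewrite !SS.
  specialize (H2 n p xi m q eta Hp Tp Mp2 Hq Tq Mq2).
  assert (H1 : Rabs (RS_sum A1 x n p xi - RS_sum A1 x m q eta) <= eps / 2).
  { eapply Rle_trans; [|apply E1].
    apply (core A1 x _ Mx (d1/2)); auto using part_wpart.
    2: lra. 2: apply (BV_weak x 0 1 Mx HMx).
    intros s t Hs' Ht' Hst. unfold A1.
    assert (L : forall u v, 0 <= u <= 1 -> 0 <= v <= 1 -> Rabs (u - v) < d1 -> Rmin u a <= Rmin v a ->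
              Rabs (A (Rmin v a) - A (Rmin u a)) <= eps / 2 / (Rabs Mx + 1)).
    { intros u v Hu Hv Huv Hle.
      assert (Hr : 0 <= Rmin v a - Rmin u a <= d1).
      { split. lra. unfold Rmin in *; repeat destruct Rle_dec; unfold Rabs in Huv; destruct Rcase_abs; lra. }
      assert (0 <= Rmin u a <= a) by (unfold Rmin; destruct Rle_dec; lra).
      assert (0 <= Rmin v a <= a) by (unfold Rmin; destruct Rle_dec; lra).
      apply (Hosc (Rmin u a) (Rmin v a)); auto; lra. }
    destruct (Rle_dec (Rmin s a) (Rmin t a)).
    - rewrite Rabs_minus_sym. apply L; auto. lra.
    - apply L; auto. rewrite Rabs_minus_sym. lra. lra. }
  replace (RS_sum A1 x n p xi + RS_sum A2 x n p xi - (RS_sum A1 x m q eta + RS_sum A2 x m q eta))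
    with ((RS_sum A1 x n p xi - RS_sum A1 x m q eta) + (RS_sum A2 x n p xi - RS_sum A2 x m q eta)) by ring.
  eapply Rle_trans. apply Rabs_triang. lra.
Qed.

Theorem lemma4p12 (x A : R -> R) :
  CBV01 x -> Omega_hat01 A -> RS_integrable A x 0 1.
Proof.
  intros Hx HA. apply CP_exists. pose proof Hx as [Hxc HxB].
  destruct HA as [HO|[HC|HB]].
  - apply CP_Omega; auto.
  - apply CP_cont; auto.
  - apply CP_BV; auto.
Qed.
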